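(* Let $0\le c\le (3-\sqrt5)/4$. For every graphon $W$, $$m_D(W)-\tfrac1{16}\ \ge\ c\left(m_{C_4}(W)-\tfrac18\right),$$ where $D=K_{1,1,2}$ is the diamond (the $4$-cycle plus one diagonal).
   Context: For a graph $H$ and a graphon $W$ (a measurable symmetric function $W:[0,1]^2\to[0,1]$), let $t_H(W)=\int_{[0,1]^{V(H)}}\prod_{uv\in E(H)}W(x_u,x_v)\,dx$ and $m_H(W)=t_H(W)+t_H(1-W)$. *)

(* Defs.v *)
From HB Require Import structures.
From mathcomp Require Import all_boot all_order all_algebra.
From mathcomp Require Import all_classical all_reals all_analysis.
Set Implicit Arguments. Unset Strict Implicit. Unset Printing Implicit Defensive.
Import Order.TTheory GRing.Theory Num.Theory.
Local Open Scope classical_set_scope.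
Local Open Scope ring_scope.

(* A graphon, represented as a function R -> R -> R whose values on
   [0,1]^2 are the relevant ones; we require the properties everywhere
   (any graphon on [0,1]^2 extends, e.g. by 0, to such a function). *)
Definition graphon (R : realType) (W : R -> R -> R) : Prop :=
  [/\ measurable_fun [set: R * R] (fun p : R * R => W p.1 p.2),
      (forall x y, W x y = W y x) &
      (forall x y, 0 <= W x y <= 1)].

Definition vert4 (R : Type) (x0 x1 x2 x3 : R) (i : 'I_4) : R :=
  match val i with 0 => x0 | 1 => x1 | 2 => x2 | _ => x3 end.

(* Homomorphism density t_H(W) of a graph H on vertex set {0,1,2,3}
   with edge list E, as an iterated Lebesgue integral over [0,1]^4
   (equal to the integral over [0,1]^4 by Tonelli, integrand >= 0). *)
Definition t4 (R : realType) (E : seq ('I_4 * 'I_4)) (W : R -> R -> R) : R :=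
  fine (\int[lebesgue_measure]_(x0 in `[0%R, 1%R])
        \int[lebesgue_measure]_(x1 in `[0%R, 1%R])
        \int[lebesgue_measure]_(x2 in `[0%R, 1%R])
        \int[lebesgue_measure]_(x3 in `[0%R, 1%R])
          (\prod_(e <- E) W (vert4 x0 x1 x2 x3 e.1) (vert4 x0 x1 x2 x3 e.2))%:E)%E.

Definition m4 (R : realType) (E : seq ('I_4 * 'I_4)) (W : R -> R -> R) : R :=
  t4 E W + t4 E (fun x y => 1 - W x y).

Definition C4_edges : seq ('I_4 * 'I_4) :=
  [:: (inord 0, inord 1); (inord 1, inord 2); (inord 2, inord 3); (inord 3, inord 0)].

Definition diamond_edges : seq ('I_4 * 'I_4) :=
  (inord 0, inord 2) :: C4_edges.

(* Main.v *)
Require Import Defs.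
From HB Require Import structures.
From mathcomp Require Import all_boot all_order all_algebra.
From mathcomp Require Import all_classical all_reals all_analysis.
From mathcomp Require Import measurable_realfun.
From mathcomp Require Import ring lra.
Import Order.TTheory GRing.Theory Num.Theory.
Local Open Scope classical_set_scope.
Local Open Scope ring_scope.

Section Infra.
Context {R : realType}.
Local Notation mu := (@lebesgue_measure R).
Local Notation D := ([set` `[0%R, 1%R]] : set R).

Definition J (f : R -> R) : R := \int[mu]_(x in D) f x.
Definition bnd {T} (f : T -> R) := exists B : R, forall x, `|f x| <= B.
Definition good {d} {T : measurableType d} (f : T -> R) :=
  measurable_fun setT f /\ bnd f.

Lemma mD : measurable D. Proof. exact: measurable_itv. Qed.

Lemma muD : mu D = 1%E.
Proof. by rewrite lebesgue_measure_itv/= lte01 oppr0 adde0. Qed.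

Lemma good_int f : good f -> mu.-integrable D (EFin \o f).
Proof.
move=> [mf [B hB]]; apply/integrableP; split.
  by apply/measurable_realfun.measurable_EFinP; exact: measurable_funS mf.
apply: (@le_lt_trans _ _ (\int[mu]_(x in D) (cst B%:E x))%E).
  apply: ge0_le_integral => //.
  - rewrite (_ : (fun x => _) = EFin \o (Num.norm \o f)) //.
    apply/measurable_realfun.measurable_EFinP; apply: measurableT_comp => //.
    exact: measurable_funS mf.
  - by move=> x _; rewrite /= lee_fin (le_trans _ (hB x)).
rewrite integral_cst; last exact: mD.
rewrite [X in (_ * X)%E](_ : _ = 1%E) ?mule1 ?ltry //; exact: muD.
Qed.

Lemma J_EFin f : good f -> (\int[mu]_(x in D) (f x)%:E)%E = (J f)%:E.
Proof. by move=> gf; rewrite fineK//; apply: integrable_fin_num; [exact: mD|exact: good_int]. Qed.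

Lemma J_cst k : J (fun _ => k) = k.
Proof.
rewrite /J Rintegral_cst; last exact: mD.
rewrite [X in _ * X](_ : _ = 1) ?mulr1 //.
by rewrite -[LHS]/(fine (mu D)) muD.
Qed.

Lemma J_add f g : good f -> good g -> J (fun x => f x + g x) = J f + J g.
Proof. by move=> gf gg; rewrite /J; apply: RintegralD; [exact: mD|exact: good_int|exact: good_int]. Qed.

Lemma J_scale k f : good f -> J (fun x => k * f x) = k * J f.
Proof. by move=> gf; rewrite /J; apply: RintegralZl; [exact: mD|exact: good_int]. Qed.

Lemma J_le f g : good f -> good g -> (forall x, f x <= g x) -> J f <= J g.
Proof. by move=> gf gg fg; apply: le_Rintegral; [exact: mD|exact: good_int|exact: good_int|]. Qed.

Lemma J_ge0 f : (forall x, 0 <= f x) -> 0 <= J f.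
Proof. by move=> f0; apply: Rintegral_ge0. Qed.

Lemma J_ext f g : (forall x, f x = g x) -> J f = J g.
Proof. by move=> fg; congr J; apply/funext. Qed.


Lemma good_sec {d} {T : measurableType d} (g : T * R -> R) t :
  good g -> good (fun y => g (t, y)).
Proof.
move=> [mg [B hB]]; split; last by exists B.
exact: measurable_fun_pair2.
Qed.

Lemma good_sec1 {d} {T : measurableType d} (g : R * T -> R) t :
  good g -> good (fun x => g (x, t)).
Proof.
move=> [mg [B hB]]; split; last by exists B.
exact: measurable_fun_pair1.
Qed.

Lemma J_bnd f B : good f -> (forall x, `|f x| <= B) -> `|J f| <= B.
Proof.
move=> gf hB; have gB : good (fun _ : R => B).
  by split; [exact: measurable_cst | exists `|B|].
have gN : good (fun _ : R => - B).
  by split; [exact: measurable_cst | exists `|B|; move=> _; rewrite normrN].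
rewrite ler_norml; apply/andP; split.
  by rewrite -[X in X <= _]J_cst; apply: J_le => // x; have := hB x; rewrite ler_norml => /andP[].
by rewrite -[X in _ <= X]J_cst; apply: J_le => // x; have := hB x; rewrite ler_norml => /andP[].
Qed.

Lemma goodJ {d} {T : measurableType d} (F : T -> R -> R) :
  good (fun p : T * R => F p.1 p.2) -> good (fun t => J (F t)).
Proof.
move=> gF; have [mF [B hB]] := gF.
have gs t : good (F t) by exact: (good_sec _ t gF).
split; last first.
  by exists B => t; apply: J_bnd => // y; exact: (hB (t, y)).
have gB : good (fun _ : R => B).
  by split; [exact: measurable_cst | exists `|B|].
have gsB t : good (fun y => F t y + B).
  split; last by exists (B + `|B|) => y; rewrite (le_trans (ler_normD _ _))// lerD2r (hB (t, y)).
  by apply: measurable_realfun.measurable_funD => //; case: (gs t).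
have -> : (fun t => J (F t)) = (fun t => J (fun y => F t y + B) - B).
  by apply/funext => t; rewrite J_add ?J_cst ?addrK.
apply: measurable_realfun.measurable_funB => //.
pose G := (fun p : T * R => ((\1_D p.2 : R) * (F p.1 p.2 + B))%:E).
have -> : (fun t => J (fun y => F t y + B)) =
    (fun t => fine (fubini_F mu G t)).
  apply/funext => t; rewrite /J /Rintegral /fubini_F integral_mkcond; congr fine.
  apply: eq_integral => y _; rewrite patchE /G /= indicE.
  by case: (y \in _); rewrite ?mul1r ?mul0r.
have mG : measurable_fun [set: T] (fubini_F mu G : T -> \bar R).
  apply: measurable_fun_fubini_tonelli_F.
    apply/measurable_realfun.measurable_EFinP; apply: measurable_realfun.measurable_funM.
      apply: measurableT_comp => //; exact: measurable_realfun.measurable_indic mD.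
    by apply: measurable_realfun.measurable_funD => //.
  move=> p; rewrite lee_fin; apply: mulr_ge0; first by rewrite /indic; case: (_ \in _); rewrite ?ler01 ?lexx.
  by have := hB p; rewrite ler_norml => /andP[h _]; lra.
exact: (measurableT_comp (measurable_realfun.fine_measurable measurableT) mG).
Qed.


Lemma good_swap (K : R -> R -> R) :
  good (fun p : R * R => K p.1 p.2) -> good (fun p : R * R => K p.2 p.1).
Proof.
move=> [mK [B hB]]; split; last by exists B => p; exact: (hB (p.2, p.1)).
rewrite (_ : (fun p : R * R => K p.2 p.1) = (fun p : R * R => K p.1 p.2) \o unstable.swap) //.
have h := measurableT_comp mK (@measurable_swap _ _ R R). exact: h.
Qed.

Lemma JJ_eq (K : R -> R -> R) : good (fun p : R * R => K p.1 p.2) ->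
  J (fun x => J (K x)) =
  fine (\int[mu]_x \int[mu]_y ((\1_D x : R) * (\1_D y : R) * K x y)%:E)%E.
Proof.
move=> gK.
have gs x : good (K x) by exact: (good_sec _ x gK).
have gJ : good (fun x => J (K x)) by exact: (goodJ _ gK).
rewrite /J /Rintegral; congr fine.
rewrite integral_mkcond; apply: eq_integral => x _; rewrite patchE.
case: ifPn => xD.
  have := J_EFin _ (gs x); rewrite /J /Rintegral => <-.
  rewrite integral_mkcond; apply: eq_integral => y _.
  by rewrite patchE !indicE xD mul1r; case: ifPn => //= _; rewrite ?mul1r ?mul0r.
by rewrite integral0_eq // => y _; rewrite indicE (negbTE xD) !mul0r.
Qed.

Lemma Fub_ge0 (K : R -> R -> R) : good (fun p : R * R => K p.1 p.2) ->
  (forall x y, 0 <= K x y) ->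
  J (fun x => J (K x)) = J (fun y => J (fun x => K x y)).
Proof.
move=> gK K0; rewrite (JJ_eq _ gK) (JJ_eq (fun a b => K b a) (good_swap _ gK)) /=; congr fine.
pose G := (fun p : R * R => ((\1_D p.1 : R) * (\1_D p.2 : R) * K p.1 p.2)%:E).
have mG : measurable_fun setT G.
  apply/measurable_EFinP; apply: measurable_funM; last by case: gK.
  apply: measurable_funM.
    by apply: measurableT_comp => //; exact: measurable_indic mD.
  by apply: measurableT_comp => //; exact: measurable_indic mD.
have G0 : forall p, (0 <= G p)%E.
  move=> p; rewrite lee_fin; apply: mulr_ge0 => //; apply: mulr_ge0;
  by rewrite /indic; case: (_ \in _); rewrite ?ler01 ?lexx.
have FT := @fubini_tonelli _ _ _ _ _ mu mu G mG G0.
rewrite /G /= in FT; rewrite FT.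
by apply: eq_integral => y _; apply: eq_integral => x _; congr EFin; ring.
Qed.

Lemma Fub (F : R -> R -> R) : good (fun p : R * R => F p.1 p.2) ->
  J (fun x => J (F x)) = J (fun y => J (fun x => F x y)).
Proof.
move=> gF; have [mF [B hB]] := gF.
pose K x y := F x y + B.
have gK : good (fun p : R * R => K p.1 p.2).
  split; first by apply: measurable_funD.
  by exists (B + `|B|) => p; rewrite /K (le_trans (ler_normD _ _))// lerD2r (hB p).
have K0 x y : 0 <= K x y by have := hB (x, y); rewrite /K ler_norml => /andP[h _]; lra.
have gB : good (fun _ : R => B) by split; [exact: measurable_cst | exists `|B|].
have e1 x : J (F x) = J (K x) - B.
  by rewrite /K J_add ?J_cst ?addrK //; exact: (good_sec _ x gF).
have e2 y : J (fun x => F x y) = J (fun x => K x y) - B.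
  by rewrite /K J_add ?J_cst ?addrK //; exact: (good_sec1 _ y gF).
rewrite (J_ext _ _ e1) (J_ext _ _ e2).
have gJ1 : good (fun x => J (K x)) by exact: (goodJ _ gK).
have gJ2 : good (fun y => J (fun x => K x y)) by exact: (goodJ _ (good_swap _ gK)).
have gN : good (fun _ : R => - B).
  by split; [exact: measurable_cst | exists `|B|; move=> _; rewrite normrN].
rewrite (J_add _ _ gJ1 gN) (J_add _ _ gJ2 gN) !J_cst Fub_ge0 //.
Qed.


Section goodalg.
Context {d} {T : measurableType d}.
Implicit Types f g : T -> R.

Lemma good_add f g : good f -> good g -> good (fun x => f x + g x).
Proof.
move=> [mf [B hB]] [mg [C hC]]; split; first exact: measurable_funD.
by exists (B + C) => x; rewrite (le_trans (ler_normD _ _))// lerD.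
Qed.

Lemma good_mul f g : good f -> good g -> good (fun x => f x * g x).
Proof.
move=> [mf [B hB]] [mg [C hC]]; split; first exact: measurable_funM.
exists (B * C) => x; rewrite normrM ler_pM //.
Qed.

Lemma good_cst k : good (fun _ : T => k).
Proof. by split; [exact: measurable_cst | exists `|k|]. Qed.

Lemma good_scale k f : good f -> good (fun x => k * f x).
Proof. by move=> gf; apply: good_mul => //; exact: good_cst. Qed.

End goodalg.

Definition up4 (P : R -> R -> R -> R -> R) : ((R * R) * R) * R -> R :=
  fun q => P q.1.1.1 q.1.1.2 q.1.2 q.2.
Definition good4 P := good (up4 P).
Definition I4 (P : R -> R -> R -> R -> R) : R :=
  J (fun a => J (fun b => J (fun c => J (fun e => P a b c e)))).

Section good4.
Variable P : R -> R -> R -> R -> R.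
Hypothesis gP : good4 P.

Lemma g4_3 a b c : good (fun e => P a b c e).
Proof. exact: (good_sec _ ((a, b), c) gP). Qed.
Lemma g4_L3 : good (fun q : (R * R) * R => J (P q.1.1 q.1.2 q.2)).
Proof. exact: (goodJ (fun q : (R * R) * R => P q.1.1 q.1.2 q.2) gP). Qed.
Lemma g4_2 a b : good (fun c => J (P a b c)).
Proof. exact: (good_sec _ (a, b) g4_L3). Qed.
Lemma g4_L2 : good (fun q : R * R => J (fun c => J (P q.1 q.2 c))).
Proof. exact: (goodJ (fun q : R * R => fun c => J (P q.1 q.2 c)) g4_L3). Qed.
Lemma g4_1 a : good (fun b => J (fun c => J (P a b c))).
Proof. exact: (good_sec _ a g4_L2). Qed.
Lemma g4_L1 : good (fun a => J (fun b => J (fun c => J (P a b c)))).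
Proof. exact: (goodJ (fun a b => J (fun c => J (P a b c))) g4_L2). Qed.
End good4.

Lemma I4_add P Q : good4 P -> good4 Q ->
  I4 (fun a b c e => P a b c e + Q a b c e) = I4 P + I4 Q.
Proof.
move=> gP gQ; rewrite /I4 -J_add; try exact: g4_L1.
apply: J_ext => a; rewrite -J_add; try exact: g4_1.
apply: J_ext => b; rewrite -J_add; try exact: g4_2.
apply: J_ext => c; rewrite -J_add; try exact: g4_3.
by [].
Qed.

Lemma I4_scale k P : good4 P -> I4 (fun a b c e => k * P a b c e) = k * I4 P.
Proof.
move=> gP; rewrite /I4 -J_scale; last exact: g4_L1.
apply: J_ext => a; rewrite -J_scale; last exact: g4_1.
apply: J_ext => b; rewrite -J_scale; last exact: g4_2.
apply: J_ext => c; rewrite -J_scale; last exact: g4_3.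
by [].
Qed.

Lemma I4_cst k : I4 (fun _ _ _ _ => k) = k.
Proof. by rewrite /I4 !J_cst. Qed.

Lemma I4_ext P Q : (forall a b c e, P a b c e = Q a b c e) -> I4 P = I4 Q.
Proof.
move=> PQ; apply: J_ext => a; apply: J_ext => b; apply: J_ext => c; apply: J_ext => e.
exact: PQ.
Qed.

Lemma t4_I4 P : good4 P ->
  fine (\int[mu]_(a in D) \int[mu]_(b in D) \int[mu]_(c in D) \int[mu]_(e in D)
    (P a b c e)%:E)%E = I4 P.
Proof.
move=> gP; rewrite /I4.
have e3 a b c : (\int[mu]_(e in D) (P a b c e)%:E)%E = (J (P a b c))%:E.
  exact: (J_EFin _ (@g4_3 P gP a b c)).
have e2 a b : (\int[mu]_(c in D) \int[mu]_(e in D) (P a b c e)%:E)%E =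
    (J (fun c => J (P a b c)))%:E.
  rewrite -J_EFin; last exact: g4_2.
  by apply: eq_integral => c _; rewrite e3.
have e1 a : (\int[mu]_(b in D) \int[mu]_(c in D) \int[mu]_(e in D) (P a b c e)%:E)%E =
    (J (fun b => J (fun c => J (P a b c))))%:E.
  rewrite -J_EFin; last exact: g4_1.
  by apply: eq_integral => b _; rewrite e2.
rewrite (_ : (\int[mu]_(a in D) _)%E = (J (fun a => J (fun b => J (fun c => J (P a b c)))))%:E) //.
rewrite -J_EFin; last exact: g4_L1.
by apply: eq_integral => a _; rewrite e1.
Qed.


Lemma good_ext {d} {T : measurableType d} (f g : T -> R) :
  (forall x, f x = g x) -> good f -> good g.
Proof. by move=> fg; rewrite (_ : f = g) //; apply/funext. Qed.

Lemma good_comp {d d'} {T : measurableType d} {U : measurableType d'}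
  {f : U -> R} {m : T -> U} : good f -> measurable_fun setT m -> good (f \o m).
Proof.
move=> [mf [B hB]] mm; split; last by exists B => x; exact: hB.
exact: measurableT_comp mf mm.
Qed.

Lemma good_fst (f : R -> R) : good f -> good (fun p : R * R => f p.1).
Proof. by move=> gf; exact: (good_comp gf (@measurable_fst _ _ R R)). Qed.
Lemma good_snd (f : R -> R) : good f -> good (fun p : R * R => f p.2).
Proof. by move=> gf; exact: (good_comp gf (@measurable_snd _ _ R R)). Qed.

Section Main.
Variable W : R -> R -> R.
Hypothesis gW : graphon W.

Let mW : measurable_fun setT (fun p : R * R => W p.1 p.2).
Proof. by case: gW. Qed.
Let Wsym x y : W x y = W y x.
Proof. by case: gW => _ h _; exact: h. Qed.
Let W01 x y : 0 <= W x y <= 1.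
Proof. by case: gW => _ _ h; exact: h. Qed.

Definition u x y := W x y - 1 / 2.

Lemma u_sym x y : u x y = u y x.
Proof. by rewrite /u Wsym. Qed.

Lemma u_bnd x y : `|u x y| <= 1 / 2.
Proof. by have := W01 x y; rewrite /u ler_norml => /andP[h1 h2]; apply/andP; split; lra. Qed.

Lemma u_sq x y : u x y * u x y <= 1 / 4.
Proof. have := W01 x y; rewrite /u => /andP[h1 h2]; nra. Qed.

Lemma good_u2 {d} {T : measurableType d} (pi pj : T -> R) :
  measurable_fun setT pi -> measurable_fun setT pj ->
  good (fun q => u (pi q) (pj q)).
Proof.
move=> mi mj; split; last by exists (1 / 2) => q; exact: u_bnd.
apply: measurable_funB; last exact: measurable_cst.
have := measurableT_comp mW (measurable_fun_pair mi mj); exact.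
Qed.

Lemma good_W2 {d} {T : measurableType d} (pi pj : T -> R) :
  measurable_fun setT pi -> measurable_fun setT pj ->
  good (fun q => W (pi q) (pj q)).
Proof.
move=> mi mj; split; last first.
  by exists 1 => q; have := W01 (pi q) (pj q); rewrite ler_norml => /andP[h1 h2]; apply/andP; split; lra.
have := measurableT_comp mW (measurable_fun_pair mi mj); exact.
Qed.

Lemma good_W2' {d} {T : measurableType d} (pi pj : T -> R) :
  measurable_fun setT pi -> measurable_fun setT pj ->
  good (fun q => 1 - W (pi q) (pj q)).
Proof.
move=> mi mj; apply: good_add; first exact: good_cst.
apply: (good_ext (fun q => -1 * W (pi q) (pj q))); first by move=> q; ring.
by apply: good_scale; exact: good_W2.
Qed.

Lemma gu : good (fun p : R * R => u p.1 p.2).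
Proof. by apply: good_u2; [exact: measurable_fst|exact: measurable_snd]. Qed.

End Main.

End Infra.

Arguments good_mul {R d T f g}.
Arguments good_add {R d T f g}.

Section Main2.
Context {R : realType}.
Variable W : R -> R -> R.
Hypothesis gW : graphon W.
Local Notation u := (u W).
Local Notation J := (@J R).
Let gu := gu W gW.
Let good_u2 {d} {T : measurableType d} := @good_u2 R W gW d T.
Let good_W2 {d} {T : measurableType d} := @good_W2 R W gW d T.
Let good_W2' {d} {T : measurableType d} := @good_W2' R W gW d T.
Let u_sym := u_sym W gW.
Let u_sq := u_sq W gW.

Definition dd x := J (u x).
Definition hh x z := J (fun y => u x y * u y z).
Definition gg z := J (fun x => u z x * hh x z).

Lemma gus x : good (u x).
Proof. exact: (good_sec _ x gu). Qed.
Lemma gus1 y : good (fun x => u x y).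
Proof. exact: (good_sec1 _ y gu). Qed.

Lemma gd : good dd.
Proof. exact: (goodJ _ gu). Qed.

Lemma gh : good (fun p : R * R => hh p.1 p.2).
Proof.
apply: (goodJ (fun (p : R * R) y => u p.1 y * u y p.2)).
apply: good_mul.
- exact: (good_u2 (fun q : (R * R) * R => q.1.1) (fun q => q.2)
    (measurableT_comp measurable_fst measurable_fst) measurable_snd).
- exact: (good_u2 (fun q : (R * R) * R => q.2) (fun q => q.1.2)
    measurable_snd (measurableT_comp measurable_snd measurable_fst)).
Qed.


Lemma gu' : good (fun p : R * R => u p.2 p.1).
Proof. exact: (good_u2 (fun q : R * R => q.2) (fun q => q.1) measurable_snd measurable_fst). Qed.

Lemma ghs x : good (hh x).
Proof. exact: (good_sec _ x gh). Qed.
Lemma ghs1 z : good (fun x => hh x z).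
Proof. exact: (good_sec1 _ z gh). Qed.

Lemma h_sym x z : hh x z = hh z x.
Proof. by apply: J_ext => y; rewrite mulrC (u_sym x y) (u_sym y z). Qed.

Lemma gh' : good (fun p : R * R => hh p.2 p.1).
Proof.
apply: (good_ext (fun p : R * R => hh p.1 p.2)); first by move=> p; rewrite h_sym.
exact: gh.
Qed.

Lemma gg_good : good gg.
Proof.
apply: (goodJ (fun z x => u z x * hh x z)).
apply: good_mul; [exact: gu|exact: gh'].
Qed.

Lemma J_scale_r k f : good f -> J (fun x => f x * k) = J f * k.
Proof. by move=> gf; rewrite (J_ext _ (fun x => k * f x)) ?J_scale // 1?mulrC // => x; rewrite mulrC. Qed.

Lemma I4_e (P : R -> R -> R -> R -> R) (Q : R -> R -> R -> R) :
  (forall a b c, J (P a b c) = Q a b c) ->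
  I4 P = J (fun a => J (fun b => J (fun c => Q a b c))).
Proof.
by move=> h; apply: J_ext => a; apply: J_ext => b; apply: J_ext => c; rewrite -h.
Qed.

Lemma J3_ext (Q : R -> R -> R -> R) (Q' : R -> R -> R) :
  (forall a b, J (Q a b) = Q' a b) ->
  J (fun a => J (fun b => J (Q a b))) = J (fun a => J (fun b => Q' a b)).
Proof. by move=> h; apply: J_ext => a; apply: J_ext => b; rewrite -h. Qed.

Lemma J2_ext (Q : R -> R -> R) (Q' : R -> R) :
  (forall a, J (Q a) = Q' a) ->
  J (fun a => J (Q a)) = J Q'.
Proof. by move=> h; apply: J_ext => a; rewrite -h. Qed.

Definition ss := J (fun x => dd x * dd x).
Definition e0 := J dd.
Definition tq := J (fun a => J (fun c => hh c a * hh a c)).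
Definition TT := J (fun z => dd z * gg z).

Lemma L_ud : J (fun a => J (fun c => u a c * dd c)) = ss.
Proof.
rewrite (Fub (fun a c => u a c * dd c)); last first.
  by apply: good_mul; [exact: gu|exact: (good_snd _ gd)].
apply: J_ext => c.
rewrite (J_ext _ (fun a => dd c * u c a)); last by move=> a; rewrite mulrC u_sym.
by rewrite (J_scale _ _ (gus c)).
Qed.

Lemma L_h : J (fun a => J (fun b => hh a b)) = ss.
Proof.
rewrite -L_ud; apply: J_ext => a.
rewrite /hh (Fub (fun b c => u a c * u c b)); last first.
  by apply: good_mul; [exact: (good_snd _ (gus a))|exact: gu'].
by apply: J_ext => c; rewrite (J_scale _ _ (gus c)).
Qed.

Lemma e_val : J (fun a => e0 * dd a) = e0 * e0.
Proof. by rewrite (J_scale _ _ gd). Qed.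

Lemma M1v : I4 (fun a b c e => u a b * u b c) = ss.
Proof.
rewrite (I4_e _ (fun a b c => u a b * u b c)); last by move=> *; rewrite J_cst.
rewrite (J3_ext _ (fun a b => u a b * dd b)); last by move=> a b; rewrite (J_scale _ _ (gus b)).
exact: L_ud.
Qed.

Lemma M2v : I4 (fun a b c e => u a b * u c e) = e0 * e0.
Proof.
rewrite (I4_e _ (fun a b c => u a b * dd c)); last by move=> a b c; rewrite (J_scale _ _ (gus c)).
rewrite (J3_ext _ (fun a b => u a b * e0)); last by move=> a b; rewrite (J_scale _ _ gd).
rewrite (J2_ext _ (fun a => e0 * dd a)) ?e_val // => a.
by rewrite (J_scale_r _ _ (gus a)) mulrC.
Qed.

Lemma M3v : I4 (fun a b c e => u a b * u e a) = ss.
Proof.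
rewrite (I4_e _ (fun a b c => u a b * dd a)); last first.
  move=> a b c; rewrite (J_ext _ (fun e => u a b * u a e)); last by move=> e; rewrite (u_sym e a).
  by rewrite (J_scale _ _ (gus a)).
rewrite (J3_ext _ (fun a b => u a b * dd a)); last by move=> a b; rewrite J_cst.
rewrite (J2_ext _ (fun a => dd a * dd a)) // => a.
by rewrite (J_scale_r _ _ (gus a)).
Qed.


Lemma M4v : I4 (fun a b c e => u b c * u c e) = ss.
Proof.
rewrite (I4_e _ (fun a b c => u b c * dd c)); last by move=> a b c; rewrite (J_scale _ _ (gus c)).
by rewrite (J_ext _ (fun _ => ss)) ?J_cst // => a; exact: L_ud.
Qed.

Lemma M5v : I4 (fun a b c e => u b c * u e a) = e0 * e0.
Proof.
rewrite (I4_e _ (fun a b c => u b c * dd a)); last first.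
  move=> a b c; rewrite (J_ext _ (fun e => u b c * u a e)); last by move=> e; rewrite (u_sym e a).
  by rewrite (J_scale _ _ (gus a)).
rewrite (J3_ext _ (fun a b => dd b * dd a)); last by move=> a b; rewrite (J_scale_r _ _ (gus b)).
rewrite (J2_ext _ (fun a => e0 * dd a)) ?e_val // => a.
by rewrite (J_scale_r _ _ gd).
Qed.

Lemma M6v : I4 (fun a b c e => u c e * u e a) = ss.
Proof.
rewrite (I4_e _ (fun a b c => hh c a)) //.
rewrite -L_h; apply: J_ext => a; rewrite J_cst.
by apply: J_ext => c; rewrite h_sym.
Qed.

Lemma M7v : I4 (fun a b c e => u a c * u a b) = ss.
Proof.
rewrite (I4_e _ (fun a b c => u a c * u a b)); last by move=> *; rewrite J_cst.
rewrite (J3_ext _ (fun a b => dd a * u a b)); last by move=> a b; rewrite (J_scale_r _ _ (gus a)).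
rewrite (J2_ext _ (fun a => dd a * dd a)) // => a.
by rewrite (J_scale _ _ (gus a)).
Qed.

Lemma M8v : I4 (fun a b c e => u a c * u b c) = ss.
Proof.
rewrite (I4_e _ (fun a b c => u a c * u b c)); last by move=> *; rewrite J_cst.
rewrite (J3_ext _ (fun a b => hh a b)); first exact: L_h.
by move=> a b; apply: J_ext => c; rewrite (u_sym b c).
Qed.

Lemma M9v : I4 (fun a b c e => u a c * u c e) = ss.
Proof.
rewrite (I4_e _ (fun a b c => u a c * dd c)); last by move=> a b c; rewrite (J_scale _ _ (gus c)).
by rewrite -L_ud; apply: J_ext => a; rewrite J_cst.
Qed.

Lemma M10v : I4 (fun a b c e => u a c * u e a) = ss.
Proof.
rewrite (I4_e _ (fun a b c => u a c * dd a)); last first.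
  move=> a b c; rewrite (J_ext _ (fun e => u a c * u a e)); last by move=> e; rewrite (u_sym e a).
  by rewrite (J_scale _ _ (gus a)).
rewrite (J3_ext _ (fun a b => dd a * dd a)); last by move=> a b; rewrite (J_scale_r _ _ (gus a)).
by apply: J_ext => a; rewrite J_cst.
Qed.

Lemma C4v : I4 (fun a b c e => u a b * u b c * u c e * u e a) = tq.
Proof.
rewrite (I4_e _ (fun a b c => u a b * u b c * hh c a)); last first.
  move=> a b c; rewrite (J_ext _ (fun e => (u a b * u b c) * (u c e * u e a))).
    by rewrite (J_scale _ _ (good_mul (gus c) (gus1 a))).
  by move=> e; rewrite !mulrA.
apply: J_ext => a.
rewrite (Fub (fun b c => u a b * u b c * hh c a)); last first.
  apply: good_mul; last exact: (good_snd _ (ghs1 a)).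
  by apply: good_mul; [exact: (good_fst _ (gus a))|exact: gu].
apply: J_ext => c.
rewrite (J_scale_r _ _ (good_sec1 _ c (good_mul (good_fst _ (gus a)) gu))).
by rewrite mulrC.
Qed.

Lemma Q1v : I4 (fun a b c e => u a c * u b c * u c e * u e a) = TT.
Proof.
rewrite (I4_e _ (fun a b c => u a c * u b c * hh c a)); last first.
  move=> a b c; rewrite (J_ext _ (fun e => (u a c * u b c) * (u c e * u e a))).
    by rewrite (J_scale _ _ (good_mul (gus c) (gus1 a))).
  by move=> e; rewrite !mulrA.
rewrite (J_ext _ (fun a => J (fun c => u a c * hh c a * dd c))); last first.
  move=> a; rewrite (Fub (fun b c => u a c * u b c * hh c a)); last first.
    apply: good_mul; last exact: (good_snd _ (ghs1 a)).
    by apply: good_mul; [exact: (good_snd _ (gus a))|exact: gu].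
  apply: J_ext => c.
  rewrite (J_ext _ (fun b => (u a c * hh c a) * u c b)); last first.
    by move=> b; rewrite (u_sym b c); ring.
  by rewrite (J_scale _ _ (gus c)).
rewrite (Fub (fun a c => u a c * hh c a * dd c)); last first.
  apply: good_mul; last exact: (good_snd _ gd).
  by apply: good_mul; [exact: gu|exact: gh'].
apply: J_ext => c.
rewrite (J_ext _ (fun a => (u c a * hh a c) * dd c)); last first.
  by move=> a; rewrite (u_sym a c) (h_sym c a).
rewrite (J_scale_r _ _ (good_mul (gus c) (ghs1 c))).
by rewrite mulrC.
Qed.

Lemma Q2v : I4 (fun a b c e => u a c * u a b * u c e * u e a) = TT.
Proof.
rewrite (I4_e _ (fun a b c => u a c * u a b * hh c a)); last first.
  move=> a b c; rewrite (J_ext _ (fun e => (u a c * u a b) * (u c e * u e a))).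
    by rewrite (J_scale _ _ (good_mul (gus c) (gus1 a))).
  by move=> e; rewrite !mulrA.
rewrite (J3_ext _ (fun a b => u a b * gg a)); last first.
  move=> a b; rewrite (J_ext _ (fun c => u a b * (u a c * hh c a))); last first.
    by move=> c; ring.
  by rewrite (J_scale _ _ (good_mul (gus a) (ghs1 a))).
apply: J_ext => a.
by rewrite (J_scale_r _ _ (gus a)).
Qed.

Lemma Q3v : I4 (fun a b c e => u a c * u a b * u b c * u e a) = TT.
Proof.
rewrite (I4_e _ (fun a b c => u a c * u a b * u b c * dd a)); last first.
  move=> a b c; rewrite (J_ext _ (fun e => (u a c * u a b * u b c) * u a e)).
    by rewrite (J_scale _ _ (gus a)).
  by move=> e; rewrite (u_sym e a).
rewrite (J3_ext _ (fun a b => u a b * dd a * hh a b)); last first.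
  move=> a b; rewrite (J_ext _ (fun c => (u a b * dd a) * (u a c * u c b))); last first.
    by move=> c; rewrite (u_sym b c); ring.
  by rewrite (J_scale _ (fun c => u a c * u c b) (good_mul (gus a) (gus1 b))).
apply: J_ext => a.
rewrite (J_ext _ (fun b => dd a * (u a b * hh b a))); last first.
  by move=> b; rewrite (h_sym a b); ring.
by rewrite (J_scale _ _ (good_mul (gus a) (ghs1 a))).
Qed.

Lemma Q4v : I4 (fun a b c e => u a c * u a b * u b c * u c e) = TT.
Proof.
rewrite (I4_e _ (fun a b c => u a c * u a b * u b c * dd c)); last first.
  by move=> a b c; rewrite (J_scale _ _ (gus c)).
rewrite (J_ext _ (fun a => J (fun c => u a c * dd c * hh a c))); last first.
  move=> a; rewrite (Fub (fun b c => u a c * u a b * u b c * dd c)); last first.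
    apply: good_mul; last exact: (good_snd _ gd).
    apply: good_mul; last exact: gu.
    by apply: good_mul; [exact: (good_snd _ (gus a))|exact: (good_fst _ (gus a))].
  apply: J_ext => c.
  rewrite (J_ext _ (fun b => (u a c * dd c) * (u a b * u b c))); last first.
    by move=> b; ring.
  by rewrite (J_scale _ _ (good_sec1 _ c (good_mul (good_fst _ (gus a)) gu))).
rewrite (Fub (fun a c => u a c * dd c * hh a c)); last first.
  apply: good_mul; last exact: gh.
  by apply: good_mul; [exact: gu|exact: (good_snd _ gd)].
apply: J_ext => c.
rewrite (J_ext _ (fun a => dd c * (u c a * hh a c))); last first.
  by move=> a; rewrite (u_sym a c); ring.
by rewrite (J_scale _ _ (good_mul (gus c) (ghs1 c))).
Qed.


Definition co (i : nat) (q : ((R * R) * R) * R) : R :=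
  match i with 0 => q.1.1.1 | 1 => q.1.1.2 | 2 => q.1.2 | _ => q.2 end.

Lemma mco i : measurable_fun setT (co i).
Proof.
case: i => [|[|[|i]]] /=.
- exact: measurableT_comp measurable_fst (measurableT_comp measurable_fst measurable_fst).
- exact: measurableT_comp measurable_snd (measurableT_comp measurable_fst measurable_fst).
- exact: measurableT_comp measurable_snd measurable_fst.
- exact: measurable_snd.
Qed.

Ltac leaf := first [exact: good_cst
  | exact: (good_u2 _ _ (mco 0) (mco 1)) | exact: (good_u2 _ _ (mco 0) (mco 2))
  | exact: (good_u2 _ _ (mco 0) (mco 3)) | exact: (good_u2 _ _ (mco 1) (mco 2))
  | exact: (good_u2 _ _ (mco 1) (mco 3)) | exact: (good_u2 _ _ (mco 2) (mco 3))
  | exact: (good_u2 _ _ (mco 3) (mco 0)) | exact: (good_u2 _ _ (mco 2) (mco 0))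
  | exact: (good_W2 _ _ (mco 0) (mco 1)) | exact: (good_W2 _ _ (mco 0) (mco 2))
  | exact: (good_W2 _ _ (mco 1) (mco 2)) | exact: (good_W2 _ _ (mco 2) (mco 3))
  | exact: (good_W2 _ _ (mco 3) (mco 0))
  | exact: (good_W2' _ _ (mco 0) (mco 1)) | exact: (good_W2' _ _ (mco 0) (mco 2))
  | exact: (good_W2' _ _ (mco 1) (mco 2)) | exact: (good_W2' _ _ (mco 2) (mco 3))
  | exact: (good_W2' _ _ (mco 3) (mco 0))].

Ltac g4 := rewrite /good4 /up4 /=;
  repeat first [leaf | apply: good_add | apply: good_mul].

Lemma test_g4 : good4 (fun a b c e => 1 / 4 * (u a b * u b c + u c e * u e a) + W a c * (1 - W c e)).
Proof. g4. Qed.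


Lemma prodD (V : R -> R -> R) a b c e :
  \prod_(x <- diamond_edges) V (vert4 a b c e x.1) (vert4 a b c e x.2) =
  V a c * (V a b * (V b c * (V c e * V e a))).
Proof. by rewrite /diamond_edges /C4_edges !big_cons big_nil /vert4 /= !inordK // mulr1. Qed.

Lemma prodC (V : R -> R -> R) a b c e :
  \prod_(x <- C4_edges) V (vert4 a b c e x.1) (vert4 a b c e x.2) =
  V a b * (V b c * (V c e * V e a)).
Proof. by rewrite /C4_edges !big_cons big_nil /vert4 /= !inordK // mulr1. Qed.

Lemma t4_eq E (V : R -> R -> R) :
  good4 (fun a b c e => \prod_(x <- E) V (vert4 a b c e x.1) (vert4 a b c e x.2)) ->
  t4 E V = I4 (fun a b c e => \prod_(x <- E) V (vert4 a b c e x.1) (vert4 a b c e x.2)).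
Proof. by move=> g; rewrite /t4 -t4_I4. Qed.


Lemma gPD : good4 (fun a b c e => \prod_(x <- diamond_edges) W (vert4 a b c e x.1) (vert4 a b c e x.2)).
Proof.
apply: (good_ext (up4 (fun a b c e => W a c * (W a b * (W b c * (W c e * W e a)))))).
  by move=> q; rewrite /up4 prodD.
g4.
Qed.

Lemma gPD' : good4 (fun a b c e => \prod_(x <- diamond_edges) (fun x y => 1 - W x y) (vert4 a b c e x.1) (vert4 a b c e x.2)).
Proof.
apply: (good_ext (up4 (fun a b c e => (1 - W a c) * ((1 - W a b) * ((1 - W b c) * ((1 - W c e) * (1 - W e a))))))).
  by move=> q; rewrite /up4 (prodD (fun x y => 1 - W x y)).
g4.
Qed.

Lemma gPC : good4 (fun a b c e => \prod_(x <- C4_edges) W (vert4 a b c e x.1) (vert4 a b c e x.2)).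
Proof.
apply: (good_ext (up4 (fun a b c e => W a b * (W b c * (W c e * W e a))))).
  by move=> q; rewrite /up4 prodC.
g4.
Qed.

Lemma gPC' : good4 (fun a b c e => \prod_(x <- C4_edges) (fun x y => 1 - W x y) (vert4 a b c e x.1) (vert4 a b c e x.2)).
Proof.
apply: (good_ext (up4 (fun a b c e => (1 - W a b) * ((1 - W b c) * ((1 - W c e) * (1 - W e a)))))).
  by move=> q; rewrite /up4 (prodC (fun x y => 1 - W x y)).
g4.
Qed.


Lemma mD_val : m4 diamond_edges W = 1 / 16 + 1 / 4 * (8 * ss + 2 * (e0 * e0)) + tq + 4 * TT.
Proof.
rewrite /m4 (t4_eq _ _ gPD) (t4_eq _ _ gPD') -I4_add; last first.
  exact: gPD'.
  exact: gPD.
rewrite (I4_ext _ (fun a b c e => 1 / 16 + 1 / 4 * (u a b * u b c + (u a b * u c e + (u a b * u e a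
   + (u b c * u c e + (u b c * u e a + (u c e * u e a + (u a c * u a b + (u a c * u b c
   + (u a c * u c e + u a c * u e a)))))))))
   + (u a b * u b c * u c e * u e a + (u a c * u b c * u c e * u e a + (u a c * u a b * u c e * u e a
   + (u a c * u a b * u b c * u e a + u a c * u a b * u b c * u c e)))))); last first.
  by move=> a b c e; rewrite prodD (prodD (fun x y => 1 - W x y)) /u; field.
rewrite !I4_add; try g4.
rewrite I4_cst I4_scale; last g4.
rewrite !I4_add; try g4.
rewrite M1v M2v M3v M4v M5v M6v M7v M8v M9v M10v C4v Q1v Q2v Q3v Q4v.
ring.
Qed.


Lemma mC_val : m4 C4_edges W = 1 / 8 + 1 / 2 * (4 * ss + 2 * (e0 * e0)) + 2 * tq.
Proof.
rewrite /m4 (t4_eq _ _ gPC) (t4_eq _ _ gPC') -I4_add; last first.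
  exact: gPC'.
  exact: gPC.
rewrite (I4_ext _ (fun a b c e => 1 / 8 + 1 / 2 * (u a b * u b c + (u a b * u c e + (u a b * u e a
   + (u b c * u c e + (u b c * u e a + u c e * u e a)))))
   + 2 * (u a b * u b c * u c e * u e a))); last first.
  by move=> a b c e; rewrite prodC (prodC (fun x y => 1 - W x y)) /u; field.
rewrite !I4_add; try g4.
rewrite I4_cst !I4_scale; try g4.
rewrite !I4_add; try g4.
rewrite M1v M2v M3v M4v M5v M6v C4v.
ring.
Qed.


Lemma msq (x : R) : 0 <= x * x.
Proof. by rewrite -expr2 sqr_ge0. Qed.

Lemma jensen f : good f -> J f * J f <= J (fun x => f x * f x).
Proof.
move=> gf; set m := J f.
have gff : good (fun x => f x * f x) by exact: (good_mul gf gf).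
have h0 : 0 <= J (fun x => (f x - m) * (f x - m)).
  by apply: J_ge0 => x; exact: msq.
rewrite (J_ext _ (fun x => f x * f x + ((-2 * m) * f x + m * m))) in h0; last first.
  by move=> x; ring.
rewrite J_add in h0; [|exact: gff|].
  rewrite J_add in h0; [|exact: (good_scale _ _ gf)|exact: good_cst].
  rewrite (J_scale _ _ gf) J_cst -/m in h0; lra.
by apply: good_add; [exact: (good_scale _ _ gf)|exact: good_cst].
Qed.

Lemma gJhh : good (fun z => J (fun x => hh x z * hh x z)).
Proof. by apply: (goodJ (fun z x => hh x z * hh x z)); apply: good_mul; exact: gh'. Qed.

Lemma tt_sq : tq = J (fun z => J (fun x => hh x z * hh x z)).
Proof. by apply: J_ext => a; apply: J_ext => c; rewrite (h_sym a c). Qed.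

Lemma tt_ge0 : 0 <= tq.
Proof. by rewrite tt_sq; apply: J_ge0 => z; apply: J_ge0 => x; exact: msq. Qed.

Lemma G2_le : J (fun z => gg z * gg z) <= 1 / 4 * tq.
Proof.
rewrite tt_sq -(J_scale _ _ gJhh).
apply: J_le; [exact: (good_mul gg_good gg_good)|exact: (good_scale _ _ gJhh)|].
move=> z.
have gp : good (fun x => u z x * hh x z) by exact: (good_mul (gus z) (ghs1 z)).
rewrite /gg; apply: le_trans; first exact: (jensen _ gp).
rewrite -(J_scale _ _ (good_mul (ghs1 z) (ghs1 z))).
apply: J_le.
- exact: (good_mul gp gp).
- by apply: good_scale; apply: good_mul; exact: ghs1.
- move=> x; have := u_sq z x; have := msq (hh x z); nra.
Qed.

Lemma A_ge0 l : 0 <= l * l * ss + 2 * l * TT + J (fun z => gg z * gg z).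
Proof.
have h0 : 0 <= J (fun z => (l * dd z + gg z) * (l * dd z + gg z)).
  by apply: J_ge0 => z; exact: msq.
have gdd : good (fun z => dd z * dd z) by exact: (good_mul gd gd).
have gdg : good (fun z => dd z * gg z) by exact: (good_mul gd gg_good).
have ggg : good (fun z => gg z * gg z) by exact: (good_mul gg_good gg_good).
rewrite (J_ext _ (fun z => (l * l) * (dd z * dd z) + ((2 * l) * (dd z * gg z) + gg z * gg z))) in h0; last first.
  by move=> z; ring.
rewrite J_add in h0; [|exact: (good_scale _ _ gdd)|by apply: good_add; [exact: (good_scale _ _ gdg)|exact: ggg]].
rewrite J_add in h0; [|exact: (good_scale _ _ gdg)|exact: ggg].
rewrite (J_scale _ _ gdd) (J_scale _ _ gdg) in h0.
rewrite /ss /TT; lra.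
Qed.

End Main2.

Local Close Scope classical_set_scope.

Theorem lemma4p2 (R : realType) (c : R) (W : R -> R -> R) :
  0 <= c -> c <= (3 - Num.sqrt 5) / 4 -> graphon W ->
  m4 diamond_edges W - 1 / 16 >= c * (m4 C4_edges W - 1 / 8).
Proof.
move=> c0 cr gW.
rewrite (mD_val W gW) (mC_val W gW).
have t0 := tt_ge0 W gW.
have G := G2_le W gW.
have A := A_ge0 W gW (1 - c).
move: t0 G A.
set s := ss W; set e := e0 W; set t := tq W; set T := TT W.
set G2 := J _ => t0 G A.
have e2 : 0 <= e * e by rewrite -expr2 sqr_ge0.
move: cr; set r := Num.sqrt (5 : R) => cr.
have r0 : 0 <= r by exact: sqrtr_ge0.
have r2 : r * r = 5 by rewrite -expr2 sqr_sqrtr.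
have r1 : 1 <= r by nra.
have c12 : c <= 1 / 2 by lra.
have q0 : 0 <= (3 - 4 * c - r) * (3 - 4 * c + r) by apply: mulr_ge0; lra.
have key : 1 / 2 <= (1 - c) * (1 - 2 * c) by nra.
have kt : 0 <= ((1 - c) * (1 - 2 * c) - 1 / 2) * t by apply: mulr_ge0; lra.
have hX : 0 <= (1 - c) * ((2 - 2 * c) * s + 4 * T + (1 - 2 * c) * t) by nra.
have hX' : 0 <= (2 - 2 * c) * s + 4 * T + (1 - 2 * c) * t.
  by rewrite -(pmulr_rge0 _ (_ : 0 < 1 - c)) //; lra.
have ee : 0 <= (1 / 2 - c) * (e * e) by apply: mulr_ge0; lra.
nra.
Qed.
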